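(* There is a unique family $\{\Lambda_M\}_{M\in\mathcal{M}}$ of bijections $\Lambda_M:\mathcal{B}(M)\to\mathcal{S}_{\mathsf{lex}}(M)$ such that for every $M\in\mathcal{M}$ with nonempty ground set, with $m=m(M)$ the largest element of its ground set, and every $B\in\mathcal{B}(M)$: \begin{align*} \Lambda_M(B)&\subseteq B,\\ \Lambda_M(B)&=\Lambda_{M\backslash m}(B) &&\text{if } m\notin B,\\ \Lambda_M(B)\setminus\{m\}&=\Lambda_{M/m}(B\setminus\{m\}) &&\text{if } m\in B. \end{align*}
   Context: $\mathcal{M}$ is the collection of all matroids whose ground set is a finite subset of $\mathbb{N}$; $\mathcal{B}(M)$ is the set of bases of $M$. For $M$ on ground set $E$, $V_M=\{\mathbf{e}_B : B\in\mathcal{B}(M)\}\subseteq\{0,1\}^E$ ($\mathbf{e}_B$ the characteristic vector), $I(V_M)\subseteq\mathbb{R}[x_e:e\in E]$ its vanishing ideal, and with respect to the lexicographic term order with $x_e\succ x_f$ for $e<f$, the lexicographic standard complex is $\mathcal{S}_{\mathsf{lex}}(M)=\{\tau\subseteq E:\prod_{i\in\tau}x_i\notin \mathrm{in}(I(V_M))\}$. If $E=\emptyset$ then $\mathcal{B}(M)=\mathcal{S}_{\mathsf{lex}}(M)=\{\emptyset\}$. $M\backslash m$, $M/m$ denote deletion and contraction. *)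

(* Defs.v *)
From HB Require Import structures.
From mathcomp Require Import all_boot all_order all_algebra.
From mathcomp Require Import finmap.
From mathcomp Require Import mpoly.
From mathcomp Require Import Rstruct.
From Stdlib Require Rdefinitions.
Notation Real := Rdefinitions.R.

Set Implicit Arguments.
Unset Strict Implicit.
Unset Printing Implicit Defensive.

Import GRing.Theory.
Local Open Scope fset_scope.

Definition is_matroid (E : {fset nat}) (Bs : {fset {fset nat}}) : Prop :=
  [/\ Bs != fset0,
      (forall B, B \in Bs -> B `<=` E) &
      (forall B1 B2 x, B1 \in Bs -> B2 \in Bs -> x \in B1 `\` B2 ->
         exists2 y, y \in B2 `\` B1 & (B1 `\ x) `|` [fset y] \in Bs)].

(* Deletion M \ m (standard: if m is a coloop, the bases are B \ {m};
   otherwise the bases of M avoiding m). *)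
Definition del_bases (Bs : {fset {fset nat}}) (m : nat) : {fset {fset nat}} :=
  if [forall B : Bs, m \in val B] then [fset B `\ m | B in Bs]
  else [fset B in Bs | m \notin B].

(* Contraction M / m (standard: if m is a loop, the bases are those of M;
   otherwise the sets B \ {m} for bases B containing m). *)
Definition con_bases (Bs : {fset {fset nat}}) (m : nat) : {fset {fset nat}} :=
  if [forall B : Bs, m \notin val B] then Bs
  else [fset B `\ m | B in [fset B in Bs | m \in B]].

(* The variables x_e, e in E, are indexed by 'I_#|E| via the increasing    *)
(* enumeration of E: index i <-> the i-th smallest element of E.           *)

Definition gsz (E : {fset nat}) : nat := #|` E|.
Definition gel (E : {fset nat}) (i : nat) : nat := nth 0%N (sort leq E) i.

Notation Rpoly E := {mpoly Real[gsz E]}.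

Definition charvec (E : {fset nat}) (B : {fset nat}) : 'I_(gsz E) -> Real :=
  fun i => (((gel E i \in B) : nat)%:R)%R.

Definition vanishing (E : {fset nat}) (Bs : {fset {fset nat}}) (f : Rpoly E) : Prop :=
  forall B, B \in Bs -> meval (@charvec E B) f = 0%R.

(* Lexicographic order with x_e > x_f for e < f, i.e. variable index 0 is
   the largest: m1 <lex m2 iff at the first index where they differ,
   m1 has the smaller exponent. *)
Definition lexlt n (m1 m2 : 'X_{1..n}) : bool :=
  [exists i : 'I_n, [forall j : 'I_n, (j < i)%N ==> (m1 j == m2 j)] && (m1 i < m2 i)%N].

Definition is_lead_mono n (f : {mpoly Real[n]}) (m : 'X_{1..n}) : Prop :=
  m \in msupp f /\ forall m', m' \in msupp f -> m' != m -> lexlt m' m.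

Definition in_initial (E : {fset nat}) (Bs : {fset {fset nat}}) (p : Rpoly E) : Prop :=
  exists l : seq (Rpoly E * Rpoly E * 'X_{1..gsz E}),
    (forall t, t \in l -> vanishing Bs t.1.2 /\ is_lead_mono t.1.2 t.2) /\
    p = (\sum_(t <- l) t.1.1 * 'X_[t.2])%R.

Definition sqfree_mono (E : {fset nat}) (tau : {fset nat}) : 'X_{1..gsz E} :=
  [multinom ((gel E i \in tau) : nat) | i < gsz E].

Definition in_Slex (E : {fset nat}) (Bs : {fset {fset nat}}) (tau : {fset nat}) : Prop :=
  tau `<=` E /\ ~ in_initial Bs ('X_[@sqfree_mono E tau] : Rpoly E).

Definition lam_family := {fset nat} -> {fset {fset nat}} -> {fset nat} -> {fset nat}.

Definition is_bij_to_Slex (E : {fset nat}) (Bs : {fset {fset nat}})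
    (L : {fset nat} -> {fset nat}) : Prop :=
  [/\ (forall B, B \in Bs -> in_Slex E Bs (L B)),
      (forall B1 B2, B1 \in Bs -> B2 \in Bs -> L B1 = L B2 -> B1 = B2) &
      (forall tau, in_Slex E Bs tau -> exists2 B, B \in Bs & L B = tau)].

Definition good_family (Lam : lam_family) : Prop :=
  forall E Bs, is_matroid E Bs ->
    is_bij_to_Slex E Bs (Lam E Bs) /\
    forall m, m \in E -> (forall x, x \in E -> (x <= m)%N) ->
    forall B, B \in Bs ->
      [/\ Lam E Bs B `<=` B,
          m \notin B -> Lam E Bs B = Lam (E `\ m) (del_bases Bs m) B &
          m \in B -> Lam E Bs B `\ m = Lam (E `\ m) (con_bases Bs m) (B `\ m)].

(* Main.v *)
Require Import Defs.
From HB Require Import structures.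
From mathcomp Require Import all_boot all_order all_algebra.
From mathcomp Require Import finmap.
From mathcomp Require Import mpoly Rstruct.
From Stdlib Require Import Classical ClassicalEpsilon FunctionalExtensionality.

Set Implicit Arguments.
Unset Strict Implicit.
Unset Printing Implicit Defensive.
Import GRing.Theory.


Section Gen.
Local Open Scope ring_scope.

Definition Lx n (P : ('I_n -> Real) -> Prop) (a : 'X_{1..n}) : Prop :=
  exists f : {mpoly Real[n]}, (forall v, P v -> meval v f = 0) /\
    f@_a != 0 /\ forall m, f@_m != 0 -> m != a -> lexlt m a.

Lemma lead_monoE n (f : {mpoly Real[n]}) a :
  is_lead_mono f a <-> (f@_a != 0 /\ forall m, f@_m != 0 -> m != a -> lexlt m a).
Proof.
rewrite /is_lead_mono mcoeff_msupp; split=> -[h1 h2]; split=> // m.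
  by rewrite -mcoeff_msupp; apply: h2.
by rewrite mcoeff_msupp; apply: h2.
Qed.

Lemma lexlt_irr n (m : 'X_{1..n}) : ~~ lexlt m m.
Proof. by apply/existsP=> -[i /andP[_]]; rewrite ltnn. Qed.

Lemma lexlt_addl n (c m1 m2 : 'X_{1..n}) : lexlt m1 m2 -> lexlt (c + m1)%MM (c + m2)%MM.
Proof.
case/existsP=> i /andP[/forallP h hi]; apply/existsP; exists i.
rewrite !mnmDE ltn_add2l hi andbT; apply/forallP=> j; apply/implyP=> ji.
by rewrite !mnmDE (eqP (implyP (h j) ji)).
Qed.

Lemma mcoeffMX_gen n (f : {mpoly Real[n]}) c k :
  (f * 'X_[c])@_k = if (c <= k)%MM then f@_(k - c)%MM else 0.
Proof.
case: ifP=> ck.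
  by rewrite -{1}(submK ck) addmC mcoeffMX.
rewrite {1}(mpolyE f) mulr_suml raddf_sum /= big1_seq // => m _.
rewrite -scalerAl -mpolyXD mcoeffZ mcoeffX.
case: eqP=> [e|]; last by rewrite mulr0.
by move: ck; rewrite -e lem_addl.
Qed.

Lemma Lx_mulX n P (a c : 'X_{1..n}) : Lx P a -> Lx P (a + c)%MM.
Proof.
case=> f [hv [ha hl]]; exists (f * 'X_[c]); split.
  by move=> v Pv; rewrite mevalM hv // mul0r.
rewrite mcoeffMX_gen lem_addl addmK; split=> // m.
rewrite mcoeffMX_gen; case: ifP=> cm; last by rewrite eqxx.
move=> hm hne; have hne' : (m - c)%MM != a.
  by apply: contra hne => /eqP <-; rewrite submK.
by have := lexlt_addl c (hl _ hm hne'); rewrite addmC submK // addmC.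
Qed.

Lemma Lx_empty n (P : ('I_n -> Real) -> Prop) a : (forall v, ~ P v) -> Lx P a.
Proof.
move=> hP; exists 'X_[a]; split; first by move=> v /hP.
rewrite mcoeffX eqxx oner_eq0; split=> // m; rewrite mcoeffX.
have [->|_] := eqVneq a m; first by [].
by rewrite eqxx.
Qed.

Lemma Lx_ext n (P Q : ('I_n -> Real) -> Prop) a :
  (forall v, P v <-> Q v) -> Lx P a -> Lx Q a.
Proof. by move=> h [f [hv hf]]; exists f; split=> // v /h /hv. Qed.

End Gen.


Section GenB.
Local Open Scope ring_scope.
Variable n : nat.

Definition ext (b : 'X_{1..n}) (j : nat) : 'X_{1..n.+1} :=
  [multinom (if unlift ord_max i is Some k then b k else j) | i < n.+1].
Definition trunc (m : 'X_{1..n.+1}) : 'X_{1..n} :=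
  [multinom m (lift ord_max k) | k < n].
Definition extv (v : 'I_n -> Real) (x : Real) : 'I_n.+1 -> Real :=
  fun i => if unlift ord_max i is Some k then v k else x.
Definition vtrunc (v : 'I_n.+1 -> Real) : 'I_n -> Real := fun k => v (lift ord_max k).

Lemma ext_lift b j k : ext b j (lift ord_max k) = b k.
Proof. by rewrite mnmE liftK. Qed.
Lemma ext_max b j : ext b j ord_max = j.
Proof. by rewrite mnmE unlift_none. Qed.
Lemma trunc_ext b j : trunc (ext b j) = b.
Proof. by apply/mnmP=> k; rewrite mnmE ext_lift. Qed.
Lemma ext_trunc m : ext (trunc m) (m ord_max) = m.
Proof.
apply/mnmP=> i; rewrite mnmE; case: unliftP => [k ->|->] //.
by rewrite mnmE.
Qed.
Lemma trunc_eq m k : trunc m k = m (lift ord_max k).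
Proof. by rewrite mnmE. Qed.
Lemma ext_inj b1 b2 j1 j2 : (ext b1 j1 == ext b2 j2) = (b1 == b2) && (j1 == j2).
Proof.
apply/eqP/andP=> [e|[/eqP-> /eqP->]] //.
have := congr1 trunc e; rewrite !trunc_ext => ->.
by have := congr1 (fun m : 'X_{1..n.+1} => m ord_max) e; rewrite /= !ext_max => ->.
Qed.
Lemma extv_eq v : extv (vtrunc v) (v ord_max) =1 v.
Proof. by move=> i; rewrite /extv; case: unliftP => [k ->|->]. Qed.

Lemma lm (k : 'I_n) : lift (@ord_max n) k = k :> nat.
Proof. exact: lift_max. Qed.

Lemma widen_lift (k : 'I_n) : widen_ord (leqnSn n) k = lift ord_max k.
Proof. by apply/val_inj; rewrite /= /bump leqNgt ltn_ord. Qed.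

Lemma lexltS m1 m2 : lexlt m1 m2 =
  lexlt (trunc m1) (trunc m2) || ((trunc m1 == trunc m2) && (m1 ord_max < m2 ord_max)%N).
Proof.
apply/idP/idP.
  case/existsP=> i /andP[/forallP h hi]; case: (unliftP ord_max i) h hi => [k ->|->] h hi.
    apply/orP; left; apply/existsP; exists k; rewrite !trunc_eq hi andbT.
    apply/forallP=> j; apply/implyP=> jk; rewrite !trunc_eq.
    by apply: (implyP (h (lift ord_max j))); rewrite !lm.
  apply/orP; right; rewrite hi andbT; apply/eqP/mnmP=> k; rewrite !trunc_eq.
  by apply/eqP; apply: (implyP (h (lift ord_max k))); rewrite lm /=.
case/orP=> [/existsP[k /andP[/forallP h hk]]|/andP[/eqP e hl]]; apply/existsP.
  exists (lift ord_max k); rewrite -(trunc_eq m1) -(trunc_eq m2) hk andbT; apply/forallP=> j.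
  apply/implyP; case: (unliftP ord_max j) => [j' ->|->].
    by rewrite !lm => jk; rewrite -(trunc_eq m1) -(trunc_eq m2); exact: (implyP (h j') jk).
  by rewrite lm /= ltnNge ltnW.
exists ord_max; rewrite hl andbT; apply/forallP=> j; apply/implyP.
case: (unliftP ord_max j) => [j' ->|->]; last by rewrite ltnn.
by rewrite -(trunc_eq m1) -(trunc_eq m2) e.
Qed.

Definition restr (f : {mpoly Real[n.+1]}) (x : Real) : {mpoly Real[n]} :=
  \sum_(m <- msupp f) (f@_m * x ^+ (m ord_max)) *: 'X_[trunc m].
Definition liftp (g : {mpoly Real[n]}) (j : nat) : {mpoly Real[n.+1]} :=
  \sum_(c <- msupp g) g@_c *: 'X_[ext c j].

Lemma prod_split (F : 'I_n.+1 -> Real) :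
  \prod_(i < n.+1) F i = (\prod_(k < n) F (lift ord_max k)) * F ord_max.
Proof. by rewrite big_ord_recr; congr (_ * _); apply: eq_bigr=> k _; rewrite widen_lift. Qed.

Lemma meval_restr v f x : meval v (restr f x) = meval (extv v x) f.
Proof.
rewrite [RHS]mevalE /restr raddf_sum /=; apply: eq_bigr=> m _.
rewrite mevalZ mevalX prod_split /extv unlift_none -mulrA; congr (_ * _).
rewrite mulrC; congr (_ * _); apply: eq_bigr=> k _; by rewrite liftK trunc_eq.
Qed.

Lemma mcoeff_restr f x b : (restr f x)@_b =
  \sum_(m <- msupp f) f@_m * x ^+ (m ord_max) * (trunc m == b)%:R.
Proof. by rewrite /restr raddf_sum /=; apply: eq_bigr=> m _; rewrite mcoeffZ mcoeffX. Qed.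

Lemma meval_liftp v x g j : meval (extv v x) (liftp g j) = meval v g * x ^+ j.
Proof.
rewrite (mevalE v) mulr_suml raddf_sum /=; apply: eq_bigr=> c _.
rewrite mevalZ mevalX prod_split /extv unlift_none ext_max -mulrA; congr (_ * _).
congr (_ * _); apply: eq_bigr=> k _; by rewrite liftK ext_lift.
Qed.

Lemma mcoeff_liftp g j m : (liftp g j)@_m = if m ord_max == j then g@_(trunc m) else 0.
Proof.
rewrite raddf_sum /=.
under eq_bigr => c _ do rewrite mcoeffZ mcoeffX -{1}(ext_trunc m) ext_inj.
rewrite [in RHS]eq_sym.
have [e|ne] := eqVneq j (m ord_max).
  rewrite [in RHS](mpolyE g) raddf_sum /=; apply: eq_bigr=> c _.
  by rewrite andbT mcoeffZ mcoeffX.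
by rewrite big1 // => c _; rewrite andbF mulr0.
Qed.

End GenB.


Section GenC.
Local Open Scope ring_scope.
Variable n : nat.
Variable P : ('I_n.+1 -> Real) -> Prop.
Hypothesis H01 : forall v, P v -> v ord_max = 0 \/ v ord_max = 1.
Let P0 v := P (extv v 0).
Let P1 v := P (extv v 1).

Definition isLead n' (f : {mpoly Real[n']}) a :=
  f@_a != 0 /\ forall m, f@_m != 0 -> m != a -> lexlt m a.

Lemma restr_van (f : {mpoly Real[n.+1]}) x : (forall v, P v -> meval v f = 0) ->
  forall v, P (extv v x) -> meval v (restr f x) = 0.
Proof. by move=> h v hv; rewrite meval_restr h. Qed.

Lemma restr_lead (f : {mpoly Real[n.+1]}) (a : 'X_{1..n.+1}) x : isLead f a -> (restr f x)@_(trunc a) != 0 ->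
  isLead (restr f x) (trunc a).
Proof.
move=> [ha hl] hx; split=> // b' hb' hne.
rewrite mcoeff_restr in hb'.
have [/hasP[m mf /eqP tm]|hn] := boolP (has (fun m => trunc m == b') (msupp f)).
  have fm : f@_m != 0 by rewrite -mcoeff_msupp.
  have mna : m != a by apply: contra hne => /eqP e; rewrite -tm e.
  move: (hl m fm mna); rewrite lexltS tm => /orP[//|/andP[/eqP e _]].
  by rewrite e eqxx in hne.
case/eqP: hb'; apply: big1_seq=> m /andP[_ mf].
case: eqP=> [e|_]; last by rewrite mulr0.
by case/hasP: hn; exists m => //; rewrite e.
Qed.

Lemma coef_restr0 (f : {mpoly Real[n.+1]}) (b : 'X_{1..n}) x : isLead f (ext b 0) -> (restr f x)@_b = f@_(ext b 0).
Proof.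
move=> [ha hl]; rewrite mcoeff_restr (bigD1_seq (ext b 0)) ?msupp_uniq //=; last first.
  by rewrite mcoeff_msupp.
rewrite ext_max trunc_ext eqxx expr0 !mulr1 big1_seq ?addr0 // => m /andP[mne _].
case: eqP=> [tm|_]; last by rewrite mulr0.
have [->|fm] := eqVneq (f@_m) 0; first by rewrite !mul0r.
move: (hl m fm mne); rewrite lexltS trunc_ext tm (negbTE (lexlt_irr b)) /=.
by rewrite ext_max ltn0 andbF.
Qed.

Lemma coef_restr1 (f : {mpoly Real[n.+1]}) (b : 'X_{1..n}) : isLead f (ext b 1) ->
  (restr f 1)@_b - (restr f 0)@_b = f@_(ext b 1).
Proof.
move=> [ha hl]; rewrite !mcoeff_restr -sumrB (bigD1_seq (ext b 1)) ?msupp_uniq //=; last first.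
  by rewrite mcoeff_msupp.
rewrite ext_max trunc_ext eqxx !expr1 !mulr1 ?mulr0 ?mul0r subr0 big1_seq ?addr0 // => m /andP[mne _].
case: eqP=> [tm|_]; last by rewrite !mulr0 subrr.
have [->|fm] := eqVneq (f@_m) 0; first by rewrite !mul0r subrr.
move: (hl m fm mne); rewrite lexltS trunc_ext tm (negbTE (lexlt_irr b)) /=.
rewrite eqxx ext_max ltnS leqn0 => /eqP ->.
by rewrite !expr0 subrr.
Qed.


Lemma extv_eqF (v : 'I_n.+1 -> Real) : extv (vtrunc v) (v ord_max) = v.
Proof. exact: functional_extensionality (extv_eq v). Qed.

Lemma LxE n' (Q : ('I_n' -> Real) -> Prop) a :
  Lx Q a <-> exists f, (forall v, Q v -> meval v f = 0) /\ isLead f a.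
Proof. by []. Qed.

Lemma Pcases (F : Real -> Prop) : (forall v, P0 v -> F 0) -> (forall v, P1 v -> F 1) ->
  forall v, P v -> F (v ord_max).
Proof.
move=> h0 h1 v Pv; case: (H01 Pv) => e; rewrite e.
  by apply: (h0 (vtrunc v)); rewrite /P0 -e extv_eqF.
by apply: (h1 (vtrunc v)); rewrite /P1 -e extv_eqF.
Qed.

Lemma van_lift (f : {mpoly Real[n.+1]}) (G : ('I_n -> Real) -> Real -> Real) :
  (forall v x, meval (extv v x) f = G v x) ->
  (forall v, P0 v -> G v 0 = 0) -> (forall v, P1 v -> G v 1 = 0) ->
  forall v, P v -> meval v f = 0.
Proof.
move=> hG h0 h1 v Pv; rewrite -(extv_eqF v) hG.
move: (H01 Pv) => [] e; rewrite e.
  by apply: h0; rewrite /P0 -e extv_eqF.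
by apply: h1; rewrite /P1 -e extv_eqF.
Qed.

Lemma rec0 (b : 'X_{1..n}) : Lx P (ext b 0) <-> Lx P0 b /\ Lx P1 b.
Proof.
split.
  move=> /LxE [f [hv hl]].
  have hx x : (forall v, P (extv v x) -> meval v (restr f x) = 0) /\ isLead (restr f x) b.
    split; first exact: restr_van.
    rewrite -[X in isLead _ X](trunc_ext b 0); apply: restr_lead => //.
    by rewrite trunc_ext coef_restr0 //; case: hl.
  by split; apply/LxE; [exists (restr f 0) | exists (restr f 1)]; apply: hx.
move=> [/LxE [g0 [hv0 [hb0 hl0]]] /LxE [g1 [hv1 [hb1 hl1]]]].
pose h := (g0@_b / g1@_b) *: g1 - g0.
have hb : h@_b = 0 by rewrite /h mcoeffB mcoeffZ mulfVK // subrr.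
apply/LxE; exists (liftp g0 0 + liftp h 1); split.
  apply: (van_lift (G := fun v x => meval v g0 * x ^+ 0 + meval v h * x ^+ 1)).
  - by move=> v x; rewrite mevalD !meval_liftp.
  - by move=> v /hv0 ->; rewrite expr1 !mulr0 addr0 mul0r.
  move=> v P1v; rewrite /h mevalB mevalZ hv1 // mulr0 expr0 expr1 mulr1 mulr1.
  by rewrite sub0r addrN.
split.
  by rewrite mcoeffD !mcoeff_liftp ext_max trunc_ext /= addr0.
move=> m; rewrite mcoeffD !mcoeff_liftp => hm hne.
rewrite lexltS trunc_ext ext_max.
have mE : m = ext (trunc m) (m ord_max) by rewrite ext_trunc.
move: hm hne; case E: (m ord_max) => [|[|k]] /=.
- rewrite addr0 => hm hne; have tmb : trunc m != b.
    by apply: contra hne => /eqP e; apply/eqP; rewrite {1}mE e E.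
  by rewrite (hl0 _ hm tmb).
- rewrite add0r /h => hm hne; have tmb : trunc m != b.
    by apply: contra hm => /eqP ->; rewrite -/h hb.
  move: hm; rewrite mcoeffB mcoeffZ => hm; apply/orP; left.
  have [z0|nz0] := eqVneq (g0@_(trunc m)) 0.
    have nz1 : g1@_(trunc m) != 0.
      by apply: contra hm => /eqP ->; rewrite z0 mulr0 subr0.
    exact: hl1.
  exact: hl0.
- by rewrite addr0 eqxx.
Qed.

Lemma rec1 (b : 'X_{1..n}) : Lx P (ext b 1) <-> Lx P0 b \/ Lx P1 b.
Proof.
split.
  move=> /LxE [f [hv hl]].
  have hd := coef_restr1 hl.
  have [z0|nz0] := eqVneq ((restr f 0)@_b) 0.
    right; apply/LxE; exists (restr f 1); split; first exact: restr_van.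
    rewrite -[X in isLead _ X](trunc_ext b 1); apply: restr_lead => //.
    by rewrite trunc_ext; move: hd; rewrite z0 subr0 => ->; case: hl.
  left; apply/LxE; exists (restr f 0); split; first exact: restr_van.
  by rewrite -[X in isLead _ X](trunc_ext b 1); apply: restr_lead => //; rewrite trunc_ext.
case=> /LxE [g [hv [hb hl]]].
  apply/LxE; exists (liftp g 0 - liftp g 1); split.
    apply: (van_lift (G := fun v x => meval v g * x ^+ 0 - meval v g * x ^+ 1)).
    - by move=> v x; rewrite mevalB !meval_liftp.
    - by move=> v /hv ->; rewrite !mul0r subrr.
    by move=> v _; rewrite expr0 expr1 subrr.
  split.
    by rewrite mcoeffB !mcoeff_liftp ext_max trunc_ext /= sub0r oppr_eq0.
  move=> m; rewrite mcoeffB !mcoeff_liftp => hm hne.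
  rewrite lexltS trunc_ext ext_max.
  have mE : m = ext (trunc m) (m ord_max) by rewrite ext_trunc.
  move: hm hne; case E: (m ord_max) => [|[|k]] /=.
  - rewrite subr0 => hm hne; have [e|ne] := eqVneq (trunc m) b; first by apply/orP; right.
    by rewrite hl.
  - rewrite sub0r oppr_eq0 => hm hne.
    have ne : trunc m != b.
      by apply: contra hne => /eqP e; apply/eqP; rewrite {1}mE e E.
    by rewrite hl.
  - by rewrite subrr eqxx.
apply/LxE; exists (liftp g 1); split.
  apply: (van_lift (G := fun v x => meval v g * x ^+ 1)).
  - by move=> v x; rewrite meval_liftp.
  - by move=> v _; rewrite expr1 mulr0.
  by move=> v /hv ->; rewrite mul0r.
split; first by rewrite mcoeff_liftp ext_max trunc_ext.
move=> m; rewrite mcoeff_liftp lexltS trunc_ext ext_max.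
have mE : m = ext (trunc m) (m ord_max) by rewrite ext_trunc.
case E: (m ord_max) => [|[|k]] /=; try by rewrite eqxx.
move=> hm hne; have ne : trunc m != b.
  by apply: contra hne => /eqP e; apply/eqP; rewrite {1}mE e E.
by rewrite hl.
Qed.

End GenC.


Section GenD.
Local Open Scope ring_scope.

Definition ptv N (s : nat -> bool) : 'I_N -> Real := fun i => ((s i : nat))%:R.
Arguments ptv : clear implicits.
Definition PF N (F : (nat -> bool) -> Prop) : ('I_N -> Real) -> Prop :=
  fun v => exists s, F s /\ v = ptv N s.
Definition sqm N (t : nat -> bool) : 'X_{1..N} := [multinom (t i : nat) | i < N].
Arguments ptv : clear implicits.
Arguments PF : clear implicits.
Arguments sqm : clear implicits.
Definition LG N F t := Lx (PF N F) (sqm N t).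

Lemma Lx0 (P : ('I_0 -> Real) -> Prop) a v : P v -> ~ Lx P a.
Proof.
move=> Pv [f [hv [ha hl]]]; move: (hv v Pv); rewrite mevalE.
have allm m : m = a by apply/mnmP=> -[].
under eq_bigr => m _ do rewrite big_ord0 mulr1.
rewrite (bigD1_seq a) ?msupp_uniq ?mcoeff_msupp //= big1_seq ?addr0.
  by move=> /eqP; rewrite (negbTE ha).
by move=> m /andP[h _]; rewrite (allm m) eqxx in h.
Qed.

Lemma LG0 F t : LG 0 F t <-> ~ exists s, F s.
Proof.
split.
  by move=> h [s Fs]; apply: (Lx0 (v := ptv 0 s)) h; exists s.
by move=> h; apply: Lx_empty=> v [s [Fs _]]; apply: h; exists s.
Qed.

Lemma natbR (b : bool) : ((b : nat)%:R : Real) = 0 -> b = false.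
Proof. by case: b => //= /eqP; rewrite oner_eq0. Qed.
Lemma natbR1 (b : bool) : ((b : nat)%:R : Real) = 1 -> b = true.
Proof. by case: b => //= /eqP; rewrite eq_sym oner_eq0. Qed.

Lemma sqm_ext n t : sqm n.+1 t = ext (sqm n t) (t n).
Proof.
apply/mnmP=> i; rewrite !mnmE; case: unliftP => [k ->|->].
  by rewrite mnmE lm.
by [].
Qed.

Lemma PF_ext n F (x : bool) v :
  PF n.+1 F (extv v (x : nat)%:R) <-> PF n (fun s => F s /\ s n = x) v.
Proof.
split.
  move=> [s [Fs e]]; exists s; split.
    split=> //; have := congr1 (fun w => w ord_max) e.
    rewrite /extv unlift_none /ptv /= => h.
    by move: h; case: x {e}; case: (s n) => //= /eqP; rewrite ?oner_eq0 // eq_sym oner_eq0.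
  apply: functional_extensionality=> k; have := congr1 (fun w => w (lift ord_max k)) e.
  by rewrite /extv liftK /ptv lm.
move=> [s [[Fs sx] ->]]; exists s; split=> //.
apply: functional_extensionality=> i; rewrite /extv /ptv; case: unliftP=> [k ->|->].
  by rewrite lm.
by rewrite /= sx.
Qed.

Lemma LG_rec0 n F t : t n = false ->
  LG n.+1 F t <-> LG n (fun s => F s /\ s n = false) t /\ LG n (fun s => F s /\ s n = true) t.
Proof.
move=> tn; rewrite /LG sqm_ext tn.
have H01 : forall v, PF n.+1 F v -> v ord_max = 0 \/ v ord_max = 1.
  by move=> v [s [_ ->]]; rewrite /ptv /=; case: (s n); [right|left].
rewrite (rec0 H01); split=> -[h0 h1]; split.
- by apply: Lx_ext h0=> v; apply: (PF_ext F false v).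
- by apply: Lx_ext h1=> v; apply: (PF_ext F true v).
- by apply: Lx_ext h0=> v; symmetry; apply: (PF_ext F false v).
- by apply: Lx_ext h1=> v; symmetry; apply: (PF_ext F true v).
Qed.

Lemma LG_rec1 n F t : t n = true ->
  LG n.+1 F t <-> LG n (fun s => F s /\ s n = false) t \/ LG n (fun s => F s /\ s n = true) t.
Proof.
move=> tn; rewrite /LG sqm_ext tn.
have H01 : forall v, PF n.+1 F v -> v ord_max = 0 \/ v ord_max = 1.
  by move=> v [s [_ ->]]; rewrite /ptv /=; case: (s n); [right|left].
rewrite (rec1 H01); split=> -[h|h].
- by left; apply: Lx_ext h=> v; apply: (PF_ext F false v).
- by right; apply: Lx_ext h=> v; apply: (PF_ext F true v).
- by left; apply: Lx_ext h=> v; symmetry; apply: (PF_ext F false v).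
- by right; apply: Lx_ext h=> v; symmetry; apply: (PF_ext F true v).
Qed.

Lemma LG_congr N F F' t t' : (forall i, (i < N)%N -> t i = t' i) ->
  (forall s, F s -> exists2 s', F' s' & forall i, (i < N)%N -> s i = s' i) ->
  (forall s', F' s' -> exists2 s, F s & forall i, (i < N)%N -> s i = s' i) ->
  LG N F t -> LG N F' t'.
Proof.
move=> ht h1 h2; rewrite /LG.
have -> : sqm N t = sqm N t' by apply/mnmP=> i; rewrite !mnmE ht.
apply: Lx_ext=> v; split.
  move=> [s [Fs ->]]; have [s' F's' e] := h1 s Fs; exists s'; split=> //.
  by apply: functional_extensionality=> i; rewrite /ptv e.
move=> [s' [F's' ->]]; have [s Fs e] := h2 s' F's'; exists s; split=> //.
by apply: functional_extensionality=> i; rewrite /ptv e.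
Qed.

End GenD.

Local Open Scope fset_scope.

Definition idxf (E B : {fset nat}) : nat -> bool := fun k => gel E k \in B.
Definition FE (E : {fset nat}) (Bs : {fset {fset nat}}) : (nat -> bool) -> Prop :=
  fun s => exists B, B \in Bs /\ s = idxf E B.

Lemma in_initialE (E : {fset nat}) (Bs : {fset {fset nat}}) (a : 'X_{1..gsz E}) :
  in_initial Bs ('X_[a] : Rpoly E) <->
  Lx (fun v => exists2 B, B \in Bs & v = @charvec E B) a.
Proof.
split.
  move=> [l [hl e]].
  have := congr1 (mcoeff a) e; rewrite mcoeffX eqxx raddf_sum /=.
  have [/hasP[t tl ta]|hn] := boolP (has (fun t : Rpoly E * Rpoly E * 'X_{1..gsz E} => (t.2 <= a)%MM) l).
    move=> _; have [hv /lead_monoE hld] := hl t tl.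
    have := @Lx_mulX _ (fun v => exists2 B, B \in Bs & v = @charvec E B) t.2 (a - t.2)%MM.
    rewrite addmC submK //; apply; exists t.1.2; split=> //.
    by move=> v [B hB ->]; apply: hv.
  rewrite big1_seq; first by move/eqP; rewrite oner_eq0.
  move=> t /andP[_ tl]; rewrite mcoeffMX_gen; case: ifP=> // ta.
  by case/hasP: hn; exists t.
move=> [f [hv hld]]; exists [:: (1%R, f, a)]; split.
  move=> t; rewrite inE => /eqP -> /=; split; last by apply/lead_monoE.
  by move=> B hB; apply: hv; exists B.
by rewrite big_seq1 /= mul1r.
Qed.

Lemma in_SlexE E Bs tau :
  in_Slex E Bs tau <-> tau `<=` E /\ ~ LG (gsz E) (FE E Bs) (idxf E tau).
Proof.
rewrite /in_Slex in_initialE /LG; split=> -[h1 h2]; split=> // h; apply: h2.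
  apply: Lx_ext h => v; split.
    by move=> [s [[B [hB ->]] ->]]; exists B.
  by move=> [B hB ->]; exists (idxf E B); split=> //; exists B.
apply: Lx_ext h => v; split.
  by move=> [B hB ->]; exists (idxf E B); split=> //; exists B.
by move=> [s [[B [hB ->]] ->]]; exists B.
Qed.

Lemma LGiff N F F' t t' : (forall i, (i < N)%N -> t i = t' i) ->
  (forall s, F s -> exists2 s', F' s' & forall i, (i < N)%N -> s i = s' i) ->
  (forall s', F' s' -> exists2 s, F s & forall i, (i < N)%N -> s i = s' i) ->
  LG N F t <-> LG N F' t'.
Proof.
move=> ht h1 h2; split; first exact: LG_congr.
apply: LG_congr.
- by move=> i /ht.
- by move=> s /h2 [s' ? e]; exists s' => // i /e.
- by move=> s /h1 [s' ? e]; exists s' => // i /e.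
Qed.

Section Split.
Variables (E : {fset nat}) (m : nat).
Hypothesis mE : m \in E.
Hypothesis mmax : forall x, x \in E -> (x <= m)%N.
Let E' := E `\ m.
Let n := gsz E'.

Lemma sortE : sort leq E = rcons (sort leq E') m.
Proof.
apply: (sorted_eq leq_trans anti_leq).
- exact: (sort_sorted leq_total).
- case e: (sort leq E') => [|x s] //=; rewrite rcons_path -/(sorted leq (x :: s)) -e.
  rewrite (sort_sorted leq_total) /=; apply: mmax.
  have : last x s \in x :: s by apply: mem_last.
  by rewrite -e mem_sort in_fsetD1 => /andP[_].
apply: uniq_perm.
- by rewrite sort_uniq fset_uniq.
- by rewrite rcons_uniq sort_uniq fset_uniq mem_sort in_fsetD1 eqxx.
by move=> x; rewrite mem_sort mem_rcons in_cons mem_sort in_fsetD1; case: eqP=> [->|].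
Qed.

Lemma gszE : gsz E = n.+1.
Proof. by rewrite /gsz (cardfsD1 m E) mE add1n. Qed.

Lemma gelE k : (k < n)%N -> gel E k = gel E' k.
Proof. by move=> kn; rewrite /gel sortE nth_rcons size_sort kn. Qed.

Lemma gelm : gel E n = m.
Proof. by rewrite /gel sortE nth_rcons size_sort ltnn eqxx. Qed.

Lemma gel_in k : (k < n)%N -> gel E' k \in E'.
Proof. by move=> kn; rewrite /gel -(mem_sort leq) mem_nth // size_sort. Qed.

Lemma gel_neq k : (k < n)%N -> gel E' k != m.
Proof. by move=> /gel_in; rewrite in_fsetD1 => /andP[]. Qed.

Definition V0 (Bs : {fset {fset nat}}) := [fset B in Bs | m \notin B].
Definition V1 (Bs : {fset {fset nat}}) := [fset B `\ m | B in [fset B in Bs | m \in B]].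

Lemma FE0 Bs :
  (forall s, (FE E Bs s /\ s n = false) -> exists2 s', FE E' (V0 Bs) s' & forall i, (i < n)%N -> s i = s' i) /\
  (forall s', FE E' (V0 Bs) s' -> exists2 s, (FE E Bs s /\ s n = false) & forall i, (i < n)%N -> s i = s' i).
Proof.
split.
  move=> s [[B [hB ->]] hn]; exists (idxf E' B).
    exists B; split=> //; move: hn; rewrite /idxf gelm /V0 !inE hB => ->.
    by [].
  by move=> i hi; rewrite /idxf gelE.
move=> s' [B [hB ->]]; move: hB; rewrite /V0 !inE => /andP[hB mB].
exists (idxf E B); first by split; [exists B | rewrite /idxf gelm (negbTE mB)].
by move=> i hi; rewrite /idxf gelE.
Qed.

Lemma FE1 Bs :
  (forall s, (FE E Bs s /\ s n = true) -> exists2 s', FE E' (V1 Bs) s' & forall i, (i < n)%N -> s i = s' i) /\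
  (forall s', FE E' (V1 Bs) s' -> exists2 s, (FE E Bs s /\ s n = true) & forall i, (i < n)%N -> s i = s' i).
Proof.
split.
  move=> s [[B [hB ->]] hn]; exists (idxf E' (B `\ m)).
    exists (B `\ m); split=> //; apply/imfsetP; exists B => ///=.
    by rewrite !inE hB; move: hn; rewrite /idxf gelm => ->.
  by move=> i hi; rewrite /idxf gelE // in_fsetD1 gel_neq.
move=> s' [B' [/imfsetP [B /= + ->] ->]]; rewrite !inE => /andP[hB mB].
exists (idxf E B); first by split; [exists B | rewrite /idxf gelm mB].
by move=> i hi; rewrite /idxf gelE // in_fsetD1 gel_neq.
Qed.

Lemma LG_split0 Bs tau : tau `<=` E' ->
  LG (gsz E) (FE E Bs) (idxf E tau) <->
  LG n (FE E' (V0 Bs)) (idxf E' tau) /\ LG n (FE E' (V1 Bs)) (idxf E' tau).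
Proof.
move=> /fsubsetP sub; rewrite gszE LG_rec0; last first.
  rewrite /idxf gelm; apply/negbTE/negP=> /sub; by rewrite in_fsetD1 eqxx.
have ht : forall i, (i < n)%N -> idxf E tau i = idxf E' tau i.
  by move=> i hi; rewrite /idxf gelE.
rewrite (LGiff ht (proj1 (FE0 Bs)) (proj2 (FE0 Bs))).
by rewrite (LGiff ht (proj1 (FE1 Bs)) (proj2 (FE1 Bs))).
Qed.

Lemma LG_split1 Bs tau : tau `<=` E' ->
  LG (gsz E) (FE E Bs) (idxf E (tau `|` [fset m])) <->
  LG n (FE E' (V0 Bs)) (idxf E' tau) \/ LG n (FE E' (V1 Bs)) (idxf E' tau).
Proof.
move=> /fsubsetP sub; rewrite gszE LG_rec1; last first.
  by rewrite /idxf gelm in_fsetU in_fset1 eqxx orbT.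
have ht : forall i, (i < n)%N -> idxf E (tau `|` [fset m]) i = idxf E' tau i.
  by move=> i hi; rewrite /idxf gelE // in_fsetU in_fset1 (negbTE (gel_neq hi)) orbF.
rewrite (LGiff ht (proj1 (FE0 Bs)) (proj2 (FE0 Bs))).
by rewrite (LGiff ht (proj1 (FE1 Bs)) (proj2 (FE1 Bs))).
Qed.

End Split.

Local Open Scope fset_scope.

Ltac em_case h := match goal with |- context[excluded_middle_informative ?P] =>
  destruct (excluded_middle_informative P) as [h|h]; cbn [is_left] end.

Lemma S_sub E Bs tau : in_Slex E Bs tau -> tau `<=` E.
Proof. by case. Qed.

Lemma S_empty E tau : ~ in_Slex E fset0 tau.
Proof.
rewrite in_SlexE => -[_]; apply; apply: Lx_empty=> v [s [[B [hB _]] _]].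
by rewrite in_fset0 in hB.
Qed.

Lemma S_base Bs tau : in_Slex fset0 Bs tau <-> tau = fset0 /\ exists B, B \in Bs.
Proof.
rewrite in_SlexE; have -> : gsz fset0 = 0%N by rewrite /gsz cardfs0.
rewrite LG0; split.
  move=> [h1 h2]; split; first by apply/eqP; rewrite -fsubset0.
  apply: NNPP=> h; apply: h2=> -[s [B [hB _]]]; apply: h; by exists B.
move=> [-> [B hB]]; split; first exact: fsub0set.
by apply; exists (idxf fset0 B); exists B.
Qed.

Section SplitS.
Variables (E : {fset nat}) (m : nat).
Hypothesis mE : m \in E.
Hypothesis mmax : forall x, x \in E -> (x <= m)%N.
Let E' := E `\ m.

Lemma E'sub : E' `<=` E.
Proof. exact: fsubsetDl. Qed.

Lemma S_split0 Bs (tau : {fset nat}) : tau `<=` E' ->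
  in_Slex E Bs tau <-> in_Slex E' (V0 m Bs) tau \/ in_Slex E' (V1 m Bs) tau.
Proof.
move=> sub; rewrite !in_SlexE (LG_split0 mE mmax) //.
have subE : tau `<=` E by apply: fsubset_trans sub E'sub.
split.
  move=> [_ h]; case: (not_and_or _ _ h)=> h'; [left|right]; by split.
by case=> -[_ h]; split=> // -[h0 h1].
Qed.

Lemma S_split1 Bs (tau : {fset nat}) : tau `<=` E' ->
  in_Slex E Bs (tau `|` [fset m]) <-> in_Slex E' (V0 m Bs) tau /\ in_Slex E' (V1 m Bs) tau.
Proof.
move=> sub; rewrite !in_SlexE (LG_split1 mE mmax) //.
have subE : tau `|` [fset m] `<=` E.
  rewrite fsubUset fsub1set mE andbT; apply: fsubset_trans sub E'sub.
split.
  by move=> [_ h]; split; split=> // h'; apply: h; [left|right].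
by move=> [[_ h0] [_ h1]]; split=> // -[].
Qed.

Lemma notin_sub (tau : {fset nat}) : tau `<=` E' -> m \notin tau.
Proof. by move=> /fsubsetP sub; apply/negP=> /sub; rewrite in_fsetD1 eqxx. Qed.

Lemma setD1U (tau : {fset nat}) : m \notin tau -> (tau `|` [fset m]) `\ m = tau.
Proof.
move=> h; apply/fsetP=> x; rewrite in_fsetD1 in_fsetU in_fset1.
by case: eqP=> [->|] /=; [rewrite (negbTE h)|rewrite orbF].
Qed.

Lemma setU1D (tau : {fset nat}) : m \in tau -> (tau `\ m) `|` [fset m] = tau.
Proof.
move=> h; apply/fsetP=> x; rewrite in_fsetU in_fsetD1 in_fset1.
by case: eqP=> [->|] /=; rewrite ?orbT ?orbF.
Qed.

Variables (Bs : {fset {fset nat}}) (L0 L1 L : {fset nat} -> {fset nat}).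
Hypothesis BsE : forall B, B \in Bs -> B `<=` E.
Hypothesis bij0 : is_bij_to_Slex E' (V0 m Bs) L0.
Hypothesis bij1 : is_bij_to_Slex E' (V1 m Bs) L1.
Hypothesis sub0 : forall B, B \in V0 m Bs -> L0 B `<=` B.
Hypothesis sub1 : forall B, B \in V1 m Bs -> L1 B `<=` B.
Hypothesis hL : forall B, L B = if m \in B then
   (if excluded_middle_informative (in_Slex E Bs (L1 (B `\ m) `|` [fset m]))
    then L1 (B `\ m) `|` [fset m] else L1 (B `\ m))
  else L0 B.

Lemma inV0 B : B \in Bs -> m \notin B -> B \in V0 m Bs.
Proof. by move=> hB hm; rewrite /V0 !inE hB. Qed.
Lemma inV1 B : B \in Bs -> m \in B -> B `\ m \in V1 m Bs.
Proof. by move=> hB hm; apply/imfsetP; exists B => //=; rewrite !inE hB. Qed.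
Lemma V1P B' : B' \in V1 m Bs -> exists2 B, B \in Bs & m \in B /\ B' = B `\ m.
Proof. by move=> /imfsetP [B /= + ->]; rewrite !inE => /andP[hB mB]; exists B. Qed.

Lemma bij_step : is_bij_to_Slex E Bs L /\ forall B, B \in Bs -> L B `<=` B.
Proof.
case: bij0 => [mem0 inj0 surj0]; case: bij1 => [mem1 inj1 surj1].
have S1sub B : B \in Bs -> m \in B -> L1 (B `\ m) `<=` E'.
  by move=> hB hm; apply: S_sub (mem1 _ (inV1 hB hm)).
split; first split.
- move=> B hB; rewrite hL; case: (boolP (m \in B)) => hm.
    em_case hh => //.
    by apply/S_split0; [exact: S1sub | right; apply: mem1; exact: inV1].
  have h0 := mem0 _ (inV0 hB hm).
  by apply/S_split0; [exact: S_sub h0 | left].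
- move=> B C hB hC; rewrite !hL.
  case: (boolP (m \in B)) => hmB; case: (boolP (m \in C)) => hmC.
  + have nB := notin_sub (S1sub _ hB hmB); have nC := notin_sub (S1sub _ hC hmC).
    have fin : L1 (B `\ m) = L1 (C `\ m) -> B = C.
      move=> e; have := inj1 _ _ (inV1 hB hmB) (inV1 hC hmC) e.
      by move=> e'; rewrite -(setU1D hmB) -(setU1D hmC) e'.
    em_case hh1; em_case hh2.
    * by move=> e; apply: fin; rewrite -(setD1U nB) e setD1U.
    * by move=> e; move: nC; rewrite -e in_fsetU in_fset1 eqxx orbT.
    * by move=> e; move: nB; rewrite e in_fsetU in_fset1 eqxx orbT.
    * exact: fin.
  + have h0 := mem0 _ (inV0 hC hmC).
    em_case hS => e.
      by move: (notin_sub (S_sub h0)); rewrite -e in_fsetU in_fset1 eqxx orbT.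
    exfalso; apply: hS; apply/S_split1; first exact: S1sub.
    by rewrite e; split=> //; rewrite -e; apply: mem1; exact: inV1.
  + have h0 := mem0 _ (inV0 hB hmB).
    em_case hS => e.
      by move: (notin_sub (S_sub h0)); rewrite e in_fsetU in_fset1 eqxx orbT.
    exfalso; apply: hS; apply/S_split1; first exact: S1sub.
    by rewrite -e; split=> //; rewrite e; apply: mem1; exact: inV1.
  + by apply: inj0; apply: inV0.
- move=> sigma hS; have subE := S_sub hS.
  case: (boolP (m \in sigma)) => hm.
    have subE' : sigma `\ m `<=` E'.
      apply/fsubsetP=> x; rewrite !in_fsetD1 => /andP[-> /(fsubsetP subE) ->] //.
    move: (hS); rewrite -(setU1D hm) => /(S_split1 _ subE') [_ h1].
    have [C' hC' eC'] := surj1 _ h1; have [C hC [mC eC]] := V1P hC'.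
    exists C => //; rewrite hL mC -eC eC'.
    by em_case hh => //; rewrite setU1D in hh.
  have subE' : sigma `<=` E'.
    apply/fsubsetP=> x hx; rewrite in_fsetD1 (fsubsetP subE) // andbT.
    by apply: contra hm => /eqP <-.
  case: (classic (in_Slex E' (V0 m Bs) sigma)) => h0.
    have [B hB eB] := surj0 _ h0; move: hB; rewrite /V0 !inE => /andP[hB mB].
    by exists B => //; rewrite hL (negbTE mB).
  have h : in_Slex E' (V1 m Bs) sigma by case: (proj1 (S_split0 Bs subE') hS).
  have [C' hC' eC'] := surj1 _ h; have [C hC [mC eC]] := V1P hC'.
  exists C => //; rewrite hL mC -eC eC'.
  by em_case hh => //; move: hh => /(S_split1 _ subE') [h0' _].
- move=> B hB; rewrite hL; case: (boolP (m \in B)) => hm.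
    have s1 := sub1 (inV1 hB hm).
    have s1' : L1 (B `\ m) `<=` B by apply: fsubset_trans s1 (fsubsetDl _ _).
    em_case hh => //.
    by rewrite fsubUset s1' fsub1set hm.
  by apply: sub0; apply: inV0.
Qed.

End SplitS.

Local Open Scope fset_scope.


Definition maxE (E : {fset nat}) : nat := foldr maxn 0%N E.

Lemma maxs_ge (s : seq nat) x : x \in s -> (x <= foldr maxn 0 s)%N.
Proof.
elim: s => //= y s IH; rewrite in_cons => /orP[/eqP->|/IH h]; first exact: leq_maxl.
by apply: leq_trans h (leq_maxr _ _).
Qed.

Lemma maxs_in (s : seq nat) : s != [::] -> foldr maxn 0 s \in s.
Proof.
elim: s => // y s IH _; rewrite [foldr _ _ _]/= in_cons.
case: s IH => [|z s] IH; first by rewrite maxn0 eqxx.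
move: (IH isT); set M := foldr maxn 0 (z :: s) => h.
case: (leqP y M) => hy.
  by rewrite h orbT.
by rewrite eqxx.
Qed.

Lemma maxE_eq E m : m \in E -> (forall x, x \in E -> (x <= m)%N) -> maxE E = m.
Proof.
move=> mE mmax; apply/anti_leq; rewrite maxs_ge // andbT; apply: mmax.
by apply: maxs_in; apply/eqP=> e; rewrite -[m \in E]/(m \in (E : seq nat)) e in mE.
Qed.

Lemma maxE_prop E : E != fset0 -> maxE E \in E /\ forall x, x \in E -> (x <= maxE E)%N.
Proof.
move=> hE; split; last by move=> x; apply: maxs_ge.
apply: maxs_in; apply/eqP=> e; case/fset0Pn: hE=> x.
by rewrite -[x \in E]/(x \in (E : seq nat)) e.
Qed.

Fixpoint lamF (k : nat) (E : {fset nat}) (Bs : {fset {fset nat}}) (B : {fset nat}) : {fset nat} :=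
  match k with
  | 0 => fset0
  | k'.+1 =>
    let m := maxE E in
    if m \in B then
      let tau := lamF k' (E `\ m) (con_bases Bs m) (B `\ m) in
      if excluded_middle_informative (in_Slex E Bs (tau `|` [fset m])) then tau `|` [fset m]
      else tau
    else lamF k' (E `\ m) (del_bases Bs m) B
  end.

Definition Lam : lam_family := fun E Bs B => lamF #|` E| E Bs B.

Lemma Lam_unfold E Bs B m : m \in E -> (forall x, x \in E -> (x <= m)%N) ->
  Lam E Bs B = if m \in B then
   (if excluded_middle_informative
         (in_Slex E Bs (Lam (E `\ m) (con_bases Bs m) (B `\ m) `|` [fset m]))
    then Lam (E `\ m) (con_bases Bs m) (B `\ m) `|` [fset m]
    else Lam (E `\ m) (con_bases Bs m) (B `\ m))
  else Lam (E `\ m) (del_bases Bs m) B.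
Proof.
move=> mE mmax; rewrite /Lam {1}(cardfsD1 m E) mE add1n /=.
by rewrite (maxE_eq mE mmax).
Qed.

Lemma del_sub E Bs m : (forall B, B \in Bs -> B `<=` E) ->
  forall B, B \in del_bases Bs m -> B `<=` E `\ m.
Proof.
move=> hs B; rewrite /del_bases; case: ifP=> hc.
  by move=> /imfsetP [B0 /= hB0 ->]; apply: fsetSD; apply: hs.
rewrite !inE => /andP[hB hm]; apply/fsubsetD1P; split=> //; exact: hs.
Qed.

Lemma con_sub E Bs m : (forall B, B \in Bs -> B `<=` E) ->
  forall B, B \in con_bases Bs m -> B `<=` E `\ m.
Proof.
move=> hs B; rewrite /con_bases; case: ifP=> hc.
  move=> hB; apply/fsubsetD1P; split; first exact: hs.
  by move/forallP: hc => /(_ [` hB]).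
by move=> /imfsetP [B0 /= + ->]; rewrite !inE => /andP[hB0 _]; apply: fsetSD; apply: hs.
Qed.

Lemma bij_empty E L : is_bij_to_Slex E fset0 L.
Proof. by split=> [B|B1 B2|tau /S_empty]; rewrite ?in_fset0. Qed.

Lemma exist_k k : forall (E : {fset nat}) (Bs : {fset {fset nat}}), #|` E| = k -> (forall B, B \in Bs -> B `<=` E) ->
  is_bij_to_Slex E Bs (Lam E Bs) /\ forall B, B \in Bs -> Lam E Bs B `<=` B.
Proof.
elim: k => [|k IH] E Bs hk hs.
  move: (cardfs0_eq hk) => E0; subst E.
  have L0 B : Lam fset0 Bs B = fset0 by rewrite /Lam cardfs0.
  split; last by move=> B _; rewrite L0 fsub0set.
  split.
  - by move=> B hB; rewrite L0; apply/S_base; split=> //; exists B.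
  - move=> B1 B2 h1 h2 _; move: (hs _ h1) (hs _ h2); rewrite !fsubset0 => /eqP-> /eqP->.
    by [].
  - by move=> tau /S_base [-> [B hB]]; exists B; rewrite ?L0.
have hE : E != fset0 by rewrite -cardfs_gt0 hk.
have [mE mmax] := maxE_prop hE; set m := maxE E in mE mmax.
have hk' : #|` E `\ m| = k by move: hk; rewrite (cardfsD1 m E) mE add1n => -[].
have [bD sD] := IH _ _ hk' (del_sub hs).
have [bC sC] := IH _ _ hk' (con_sub hs).
have [bij0 sub0] : is_bij_to_Slex (E `\ m) (V0 m Bs) (Lam (E `\ m) (del_bases Bs m)) /\
    forall B, B \in V0 m Bs -> Lam (E `\ m) (del_bases Bs m) B `<=` B.
  case: (boolP [forall B : Bs, m \in val B]) => hc.
    have -> : V0 m Bs = fset0.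
      apply/fsetP=> B; rewrite /V0 !inE; apply/negP=> /andP[hB hm].
      by move/forallP: hc => /(_ [` hB]) /=; rewrite (negbTE hm).
    by split; [apply: bij_empty | move=> B; rewrite in_fset0].
  by move: bD sD; rewrite /del_bases (negbTE hc).
have [bij1 sub1] : is_bij_to_Slex (E `\ m) (V1 m Bs) (Lam (E `\ m) (con_bases Bs m)) /\
    forall B, B \in V1 m Bs -> Lam (E `\ m) (con_bases Bs m) B `<=` B.
  case: (boolP [forall B : Bs, m \notin val B]) => hc.
    have -> : V1 m Bs = fset0.
      apply/fsetP=> B'; rewrite in_fset0; apply/negP=> /imfsetP [B /= + _].
      rewrite !inE => /andP[hB hm].
      by move/forallP: hc => /(_ [` hB]) /=; rewrite hm.
    by split; [apply: bij_empty | move=> B; rewrite in_fset0].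
  by move: bC sC; rewrite /con_bases (negbTE hc).
apply: (bij_step mE mmax bij0 bij1 sub0 sub1) => B.
exact: Lam_unfold.
Qed.

Lemma setD1_notin (tau : {fset nat}) m : m \notin tau -> tau `\ m = tau.
Proof. exact: mem_fsetD1. Qed.

Lemma con_mem (Bs : {fset {fset nat}}) (m : nat) (B : {fset nat}) : B \in Bs -> m \in B -> B `\ m \in con_bases Bs m.
Proof.
move=> hB hm; rewrite /con_bases; case: ifP=> hc.
  by move/forallP: hc => /(_ [` hB]) /=; rewrite hm.
by apply/imfsetP; exists B => //=; rewrite !inE hB.
Qed.

Lemma del_mem (Bs : {fset {fset nat}}) (m : nat) (B : {fset nat}) : B \in Bs -> m \notin B -> B \in del_bases Bs m.
Proof.
move=> hB hm; rewrite /del_bases; case: ifP=> hc.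
  by move/forallP: hc => /(_ [` hB]) /=; rewrite (negbTE hm).
by rewrite !inE hB.
Qed.

Lemma Lam_good : good_family Lam.
Proof.
move=> E Bs [hne hs hex].
have [bij sub] := exist_k (erefl #|` E|) hs.
split=> // m mE mmax B hB; split; first exact: sub.
  by move=> hm; rewrite (Lam_unfold _ _ mE mmax) (negbTE hm).
move=> hm; rewrite (Lam_unfold _ _ mE mmax) hm.
have hk : #|` E `\ m| = #|` E `\ m| by [].
have [_ sC] := exist_k hk (con_sub hs).
have hBm := con_mem hB hm.
have nt : m \notin Lam (E `\ m) (con_bases Bs m) (B `\ m).
  apply/negP=> /(fsubsetP (sC _ hBm)); by rewrite in_fsetD1 eqxx.
by em_case hh; [rewrite setD1U | rewrite setD1_notin].
Qed.

Lemma fset_exch (B1 : {fset nat}) m x y : x != m -> y != m ->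
  ((B1 `\ m) `\ x) `|` [fset y] = ((B1 `\ x) `|` [fset y]) `\ m.
Proof.
move=> xm ym; apply/fsetP=> z; rewrite !(in_fsetU, in_fsetD1, in_fset1).
case: (eqVneq z m) => [->|zm] /=.
  by rewrite andbF eq_sym (negbTE ym).
by [].
Qed.

Lemma del_matroid (E : {fset nat}) (Bs : {fset {fset nat}}) (m : nat) : is_matroid E Bs -> is_matroid (E `\ m) (del_bases Bs m).
Proof.
move=> [hne hs hex]; split; last 1 first.
- move=> B1' B2' x; rewrite /del_bases; case: ifP=> hc.
    move=> /imfsetP [B1 /= h1 ->] /imfsetP [B2 /= h2 ->].
    rewrite in_fsetD !in_fsetD1 => /andP[hx2 /andP[xm xB1]].
    have xB2 : x \notin B2 by move: hx2; rewrite xm.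
    have m1 : m \in B1 by move/forallP: hc => /(_ [` h1]).
    have hx : x \in B1 `\` B2 by rewrite in_fsetD xB1 xB2.
    have [y + hy] := hex B1 B2 x h1 h2 hx.
    rewrite inE => /andP[yB1 yB2].
    have ym : y != m by apply: contra yB1 => /eqP ->.
    exists y; first by rewrite !inE ym yB2 (negbTE yB1).
    by rewrite fset_exch //; apply/imfsetP; exists (B1 `\ x `|` [fset y]).
  move=> hB1 hB2 hx; move: hB1 hB2; rewrite !inE => /andP[h1 m1] /andP[h2 m2].
  have [y + hy] := hex B1' B2' x h1 h2 hx.
  rewrite in_fsetD => /andP[yB1 yB2]; exists y; first by rewrite in_fsetD yB1 yB2.
  have ym : y != m by apply: contra m2 => /eqP <-.
  by rewrite !inE hy /= (negbTE m1) andbF eq_sym (negbTE ym).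
- rewrite /del_bases; case: ifP=> hc; case/fset0Pn: hne=> B0 h0; apply/fset0Pn.
    by exists (B0 `\ m); apply/imfsetP; exists B0.
  move/negbT/forallPn: hc => [[B /= hB] hm]; exists B; by rewrite !inE hB.
- exact: del_sub.
Qed.

Lemma con_matroid (E : {fset nat}) (Bs : {fset {fset nat}}) (m : nat) : is_matroid E Bs -> is_matroid (E `\ m) (con_bases Bs m).
Proof.
move=> [hne hs hex]; split; last 1 first.
- move=> B1' B2' x; rewrite /con_bases; case: ifP=> hc; first exact: hex.
  move=> /imfsetP [B1 /= + ->] /imfsetP [B2 /= + ->].
  move=> hB1 hB2 hx; move: hB1 hB2; rewrite !inE => /andP[h1 m1] /andP[h2 m2]; move: hx.
  rewrite in_fsetD !in_fsetD1 => /andP[hx2 /andP[xm xB1]].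
  have xB2 : x \notin B2 by move: hx2; rewrite xm.
  have hx : x \in B1 `\` B2 by rewrite in_fsetD xB1 xB2.
    have [y + hy] := hex B1 B2 x h1 h2 hx.
  rewrite inE => /andP[yB1 yB2].
  have ym : y != m by apply: contra yB1 => /eqP ->.
  exists y; first by rewrite !inE ym yB2 (negbTE yB1).
  rewrite fset_exch //; apply/imfsetP; exists (B1 `\ x `|` [fset y]) => //=.
  by rewrite !inE hy /= eq_sym xm m1.
- rewrite /con_bases; case: ifP=> hc //.
  move/negbT/forallPn: hc => [[B /= hB]]; rewrite negbK => hm; apply/fset0Pn.
  by exists (B `\ m); apply/imfsetP; exists B => //=; rewrite !inE hB.
- exact: con_sub.
Qed.

Section Uniq.
Variables Lam1 Lam2 : lam_family.
Hypothesis g1 : good_family Lam1.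
Hypothesis g2 : good_family Lam2.

Lemma uniq_helper (La Lb : lam_family) E Bs m B :
  good_family La -> good_family Lb -> is_matroid E Bs ->
  m \in E -> (forall x, x \in E -> (x <= m)%N) ->
  (forall C, C \in del_bases Bs m -> La (E `\ m) (del_bases Bs m) C = Lb (E `\ m) (del_bases Bs m) C) ->
  (forall C, C \in con_bases Bs m -> La (E `\ m) (con_bases Bs m) C = Lb (E `\ m) (con_bases Bs m) C) ->
  B \in Bs -> m \in B -> m \in La E Bs B -> m \notin Lb E Bs B -> False.
Proof.
move=> ga gb hM mE mmax ihD ihC hB mB ma mb.
have [[memA injA surjA] hA] := ga E Bs hM.
have [[memB injB surjB] hB'] := gb E Bs hM.
have [[_ injBC _] _] := gb _ _ (con_matroid m hM).
have [C hC eC] := surjA _ (memB _ hB).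
have [_ dA cA] := hA m mE mmax C hC.
have [_ dB cB] := hB' m mE mmax C hC.
case: (boolP (m \in C)) => mC.
  have [_ _ cBB] := hB' m mE mmax B hB.
  have e : Lb (E `\ m) (con_bases Bs m) (C `\ m) = Lb (E `\ m) (con_bases Bs m) (B `\ m).
    by rewrite -ihC ?con_mem // -cA // eC cBB.
  have := injBC _ _ (con_mem hC mC) (con_mem hB mB) e.
  move=> e'; have CB : C = B by rewrite -(setU1D mC) e' setU1D.
  by move: mb; rewrite -eC CB ma.
have e : Lb E Bs C = Lb E Bs B.
  by rewrite dB // -ihD ?del_mem // -dA // eC.
by move: mC; rewrite (injB _ _ hC hB e) mB.
Qed.

Lemma uniq_k k : forall (E : {fset nat}) (Bs : {fset {fset nat}}), #|` E| = k ->
  is_matroid E Bs -> forall B, B \in Bs -> Lam1 E Bs B = Lam2 E Bs B.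
Proof.
elim: k => [|k IH] E Bs hk hM B hB.
  move: (cardfs0_eq hk) => E0; subst E.
  have [[m1 _ _] _] := g1 hM; have [[m2 _ _] _] := g2 hM.
  by case/S_base: (m1 _ hB) => ->; case/S_base: (m2 _ hB) => ->.
have hE : E != fset0 by rewrite -cardfs_gt0 hk.
have [mE mmax] := maxE_prop hE; set m := maxE E in mE mmax.
have hk' : #|` E `\ m| = k by move: hk; rewrite (cardfsD1 m E) mE add1n => -[].
have ihD := IH _ _ hk' (del_matroid m hM).
have ihC := IH _ _ hk' (con_matroid m hM).
have [_ h1] := g1 hM; have [_ h2] := g2 hM.
have [_ d1 c1] := h1 m mE mmax B hB; have [_ d2 c2] := h2 m mE mmax B hB.
case: (boolP (m \in B)) => mB; last by rewrite d1 // d2 // ihD // del_mem.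
have eD : Lam1 E Bs B `\ m = Lam2 E Bs B `\ m by rewrite c1 // c2 // ihC // con_mem.
have ihD' C : C \in del_bases Bs m -> Lam2 (E `\ m) (del_bases Bs m) C = Lam1 (E `\ m) (del_bases Bs m) C.
  by move=> hC; rewrite ihD.
have ihC' C : C \in con_bases Bs m -> Lam2 (E `\ m) (con_bases Bs m) C = Lam1 (E `\ m) (con_bases Bs m) C.
  by move=> hC; rewrite ihC.
apply/fsetP=> x; case: (eqVneq x m) => [->|xm].
  case: (boolP (m \in Lam1 E Bs B)) => a; case: (boolP (m \in Lam2 E Bs B)) => b //.
    by exfalso; apply: (uniq_helper g1 g2 hM mE mmax ihD ihC hB mB a b).
  by exfalso; apply: (uniq_helper g2 g1 hM mE mmax ihD' ihC' hB mB b a).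
have := congr1 (fun X : {fset nat} => x \in X) eD; rewrite /= !in_fsetD1 xm /=.
by [].
Qed.

End Uniq.

Theorem corollary1p2 :
  (exists Lam : lam_family, good_family Lam) /\
  (forall Lam1 Lam2 : lam_family, good_family Lam1 -> good_family Lam2 ->
     forall E Bs, is_matroid E Bs -> forall B, B \in Bs -> Lam1 E Bs B = Lam2 E Bs B).
Proof.
split; first by exists Lam; exact: Lam_good.
move=> L1 L2 g1 g2 E Bs hM B hB; exact: (uniq_k g1 g2 (erefl _) hM hB).
Qed.
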